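(* Let $\phi_1,\ldots,\phi_n\vdash\psi_0$ be a sequent of $NOM$. Suppose that for every orthomodular lattice $\mathcal Q$ and every function $[\![\cdot]\!]:\Phi\to\mathcal Q$ satisfying $[\![\phi\wedge\psi]\!]=[\![\phi]\!]\wedge[\![\psi]\!]$, $[\![\phi\rightarrow\psi]\!]=[\![\phi]\!]\rightarrow[\![\psi]\!]$, and $[\![\neg\phi]\!]=\neg[\![\phi]\!]$ for all formulas $\phi,\psi$, we have $[\![\phi_1]\!]\mathbin{\&}\cdots\mathbin{\&}[\![\phi_n]\!]\le[\![\psi_0]\!]$. Then $\phi_1,\ldots,\phi_n\vdash\psi_0$ is derivable in $NOM$.
   Context: $\Phi$ is the set of formulas of the propositional deductive system $NOM$: formulas are built from propositional letters using $\wedge$, $\rightarrow$, $\neg$. Sequents are $\phi_1,\ldots,\phi_n\vdash\psi$ ($n\ge0$) with antecedent a finite ordered sequence. With $\Gamma$ a finite possibly empty sequence of formulas and $\phi,\psi,\chi$ formulas, the rules of $NOM$ are: (assumption) $\Gamma,\phi\vdash\phi$; (cut) $\Gamma\vdash\phi$, $\Gamma,\phi\vdash\psi$ $\Rightarrow$ $\Gamma\vdash\psi$; (paste) $\Gamma\vdash\phi$, $\Gamma\vdash\psi$ $\Rightarrow$ $\Gamma,\phi\vdash\psi$; (compatible exchange) $\Gamma,\phi,\psi\vdash\phi$, $\Gamma,\phi,\psi\vdash\chi$, $\Gamma,\psi,\phi\vdash\psi$ $\Rightarrow$ $\Gamma,\psi,\phi\vdash\chi$; ($\wedge$-intro) $\Gamma\vdash\phi$,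 $\Gamma\vdash\psi$ $\Rightarrow$ $\Gamma\vdash\phi\wedge\psi$; ($\wedge$-elim) $\Gamma\vdash\phi\wedge\psi$ $\Rightarrow$ $\Gamma\vdash\phi$ and $\Rightarrow$ $\Gamma\vdash\psi$; ($\rightarrow$-intro) $\Gamma,\phi\vdash\psi$ $\Rightarrow$ $\Gamma\vdash\phi\rightarrow\psi$; ($\rightarrow$-elim) $\Gamma\vdash\phi\rightarrow\psi$ $\Rightarrow$ $\Gamma,\phi\vdash\psi$; (excluded middle) $\Gamma,\phi\vdash\psi$, $\Gamma,\neg\phi\vdash\psi$ $\Rightarrow$ $\Gamma\vdash\psi$; (explosion) $\Gamma\vdash\neg\phi$ $\Rightarrow$ $\Gamma,\phi\vdash\psi$. An orthomodular lattice is a bounded lattice with an order-reversing involution $\neg$ satisfying $a\wedge\neg a=\bot$, $a\vee\neg a=\top$, and $a\le b\Rightarrow a\vee(\neg a\wedge b)=b$. In it, $a\mathbin{\&}b=(a\vee\neg b)\wedge b$ and $a\rightarrow b=\neg a\vee(a\wedge b)$; $\&$ associates to the left and $a_1\mathbin{\&}\cdots\mathbin{\&}a_n=\top$ when $n=0$. *)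

(* Defs.v *)
From HB Require Import structures.
From mathcomp Require Import all_boot all_order.
Set Implicit Arguments. Unset Strict Implicit. Unset Printing Implicit Defensive.
Import Order.TTheory.
Local Open Scope order_scope.

Inductive form : Type :=
  | Var  : nat -> form
  | And  : form -> form -> form
  | Imp  : form -> form -> form
  | Neg  : form -> form.

(* Sequents  Gamma |- psi ; Gamma is an ordered finite sequence, and
   "Gamma, phi" is rcons Gamma phi (phi appended on the right). *)
Inductive derivable : seq form -> form -> Prop :=
  | d_assum  : forall G p, derivable (rcons G p) p
  | d_cut    : forall G p q, derivable G p -> derivable (rcons G p) q -> derivable G q
  | d_paste  : forall G p q, derivable G p -> derivable G q -> derivable (rcons G p) q
  | d_cexch  : forall G p q r,
      derivable (rcons (rcons G p) q) p ->
      derivable (rcons (rcons G p) q) r ->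
      derivable (rcons (rcons G q) p) q ->
      derivable (rcons (rcons G q) p) r
  | d_andI   : forall G p q, derivable G p -> derivable G q -> derivable G (And p q)
  | d_andE1  : forall G p q, derivable G (And p q) -> derivable G p
  | d_andE2  : forall G p q, derivable G (And p q) -> derivable G q
  | d_impI   : forall G p q, derivable (rcons G p) q -> derivable G (Imp p q)
  | d_impE   : forall G p q, derivable G (Imp p q) -> derivable (rcons G p) q
  | d_em     : forall G p q,
      derivable (rcons G p) q -> derivable (rcons G (Neg p)) q -> derivable G q
  | d_explo  : forall G p q, derivable G (Neg p) -> derivable (rcons G p) q.

Definition orthomodular {d : Order.disp_t} {L : tbLatticeType d} (ortho : L -> L) : Prop :=
  [/\ forall a, ortho (ortho a) = a,
      forall a b, a <= b -> ortho b <= ortho a,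
      forall a, Order.meet a (ortho a) = \bot,
      forall a, Order.join a (ortho a) = \top
    & forall a b, a <= b -> Order.join a (Order.meet (ortho a) b) = b].

(* Sasaki product  a & b = (a \/ ~b) /\ b  and Sasaki arrow  a -> b = ~a \/ (a /\ b). *)
Definition sand {d : Order.disp_t} {L : tbLatticeType d} (ortho : L -> L) (a b : L) : L :=
  Order.meet (Order.join a (ortho b)) b.
Definition simp {d : Order.disp_t} {L : tbLatticeType d} (ortho : L -> L) (a b : L) : L :=
  Order.join (ortho a) (Order.meet a b).

Definition sand_seq {d : Order.disp_t} {L : tbLatticeType d} (ortho : L -> L) (s : seq L) : L :=
  match s with
  | [::] => \top
  | a :: s' => foldl (sand ortho) a s'
  end.

Definition interp_hom {d : Order.disp_t} {L : tbLatticeType d} (ortho : L -> L)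
  (v : form -> L) : Prop :=
  [/\ forall p q, v (And p q) = Order.meet (v p) (v q),
      forall p q, v (Imp p q) = simp ortho (v p) (v q)
    & forall p, v (Neg p) = ortho (v p)].

(* Main.v *)
Require Import Defs.
From HB Require Import structures.
From mathcomp Require Import all_boot all_order.
From mathcomp Require Import boolp.
Import Order.TTheory.
Local Open Scope order_scope.
Set Implicit Arguments. Unset Strict Implicit.

Notation D := derivable.

Lemma wk_cat G Dl X : D Dl X -> D (G ++ Dl) X.
Proof.
elim=> {Dl X}.
- by move=> G' p; rewrite -rcons_cat; exact: d_assum.
- by move=> G' p q _ IH1 _ IH2; rewrite -rcons_cat in IH2; exact: d_cut IH1 IH2.
- by move=> G' p q _ IH1 _ IH2; rewrite -rcons_cat; exact: d_paste.
- by move=> G' p q r _ IH1 _ IH2 _ IH3; rewrite -!rcons_cat in IH1 IH2 IH3 *; exact: d_cexch IH1 IH2 IH3.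
- by move=> G' p q _ IH1 _ IH2; exact: d_andI.
- by move=> G' p q _ IH; exact: d_andE1 IH.
- by move=> G' p q _ IH; exact: d_andE2 IH.
- by move=> G' p q _ IH; rewrite -rcons_cat in IH; exact: d_impI.
- by move=> G' p q _ IH; rewrite -rcons_cat; exact: d_impE.
- by move=> G' p q _ IH1 _ IH2; rewrite -rcons_cat in IH1; rewrite -rcons_cat in IH2; exact: d_em IH1 IH2.
- by move=> G' p q _ IH; rewrite -rcons_cat; exact: d_explo.
Qed.

Lemma wk0 G X : D [::] X -> D G X.
Proof. by move=> h; have := wk_cat G h; rewrite cats0. Qed.

Lemma MP G a b : D G a -> D G (Imp a b) -> D G b.
Proof. by move=> ha hab; apply: d_cut ha (d_impE hab). Qed.

Lemma Mono G a b : D [:: a] b -> D G a -> D G b.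
Proof. by move=> hab ha; apply: MP ha (wk0 G (@d_impI [::] a b hab)). Qed.

Lemma assum G p : D (rcons G p) p.
Proof. exact: d_assum. Qed.

Lemma DNE G p : D (rcons G (Neg (Neg p))) p.
Proof. apply: (d_em (p:=p)); [exact: d_assum | apply: d_explo; exact: d_assum]. Qed.

Lemma DNIimp G p : D G (Imp p (Neg (Neg p))).
Proof.
apply: (d_em (p:=Neg p)); apply: d_impI.
- apply: d_explo; exact: d_assum.
- apply: d_paste; [exact: DNE | exact: d_assum].
Qed.

Lemma DNI G p : D (rcons G p) (Neg (Neg p)).
Proof. exact: d_impE (DNIimp _ _). Qed.

Lemma DNI' G p : D G p -> D G (Neg (Neg p)).
Proof. by move=> h; apply: d_cut h (DNI _ _). Qed.

Lemma Contra G p R : D G p -> D G (Neg p) -> D G R.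
Proof. by move=> h1 h2; apply: d_cut h1 (d_explo _ h2). Qed.

Lemma NegI G p : D (rcons G p) (Neg p) -> D G (Neg p).
Proof. by move=> h; apply: d_em h (d_assum _ _). Qed.

Lemma botctx G c Y : D G (Neg c) -> D (rcons G c) Y.
Proof. exact: d_explo. Qed.

Lemma Kill G a c R : D G (Neg c) -> D (rcons G a) c -> D (rcons G a) R.
Proof.
move=> hc hac; apply: (@d_cut _ c); first exact: hac.
apply: (d_cexch (p:=c)).
- apply: d_paste; exact: d_explo.
- apply: d_paste; exact: d_explo.
- apply: d_paste; [exact: hac | exact: d_assum].
Qed.

Lemma Contrapos G a b : D [:: a] b -> D G (Neg b) -> D G (Neg a).
Proof.
move=> hab hb; apply: NegI; apply: Kill hb _.
apply: Mono hab _; exact: d_assum.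
Qed.

Lemma C5 G x y : D [:: Neg x] y -> D (rcons (rcons G x) y) x.
Proof.
move=> h; apply: (d_em (p:=Neg x)); last exact: DNE.
apply: (d_cexch (p:=Neg x)).
- apply: d_paste; apply: d_explo; exact: DNI.
- apply: d_paste; apply: d_explo; exact: DNI.
- apply: Mono h _; exact: d_assum.
Qed.

Definition T0 := Imp (Var 0) (Var 0).
Definition Or' a b := Neg (And (Neg a) (Neg b)).
Definition leF a b := D [:: a] b.

Lemma thmT0 G : D G T0.
Proof. apply: d_impI; exact: d_assum. Qed.

Lemma leF_refl a : leF a a.
Proof. exact: (d_assum [::]). Qed.

Lemma leF_trans a b c : leF a b -> leF b c -> leF a c.
Proof. by move=> h1 h2; apply: Mono h2 h1. Qed.

Lemma leF_and a b x : leF x a -> leF x b -> leF x (And a b).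
Proof. exact: d_andI. Qed.
Lemma leF_andl a b : leF (And a b) a.
Proof. apply: d_andE1; exact: leF_refl. Qed.
Lemma leF_andr a b : leF (And a b) b.
Proof. apply: d_andE2; exact: leF_refl. Qed.

Lemma leF_top a : leF a T0.
Proof. exact: thmT0. Qed.
Lemma leF_bot a : leF (Neg T0) a.
Proof. apply: Contra; [exact: thmT0 | exact: leF_refl]. Qed.

Lemma leF_DNI a : leF a (Neg (Neg a)).
Proof. exact: (DNI [::]). Qed.
Lemma leF_DNE a : leF (Neg (Neg a)) a.
Proof. exact: (DNE [::]). Qed.

Lemma leF_neg a b : leF a b -> leF (Neg b) (Neg a).
Proof. move=> h; apply: Contrapos h _; exact: leF_refl. Qed.

Lemma leF_andN a : leF (And a (Neg a)) (Neg T0).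
Proof. apply: Contra; [exact: leF_andl | exact: leF_andr]. Qed.

Lemma leF_orl a b : leF a (Or' a b).
Proof.
apply: NegI; apply: (Kill (c := Neg a)); first exact: leF_DNI.
apply: Mono (leF_andl _ _) _; exact: d_assum.
Qed.
Lemma leF_orr a b : leF b (Or' a b).
Proof.
apply: NegI; apply: (Kill (c := Neg b)); first exact: leF_DNI.
apply: Mono (leF_andr _ _) _; exact: d_assum.
Qed.
Lemma leF_orP a b c : leF a c -> leF b c -> leF (Or' a b) c.
Proof.
move=> ha hb; apply: leF_trans (leF_DNE c).
apply: leF_neg; apply: leF_and; exact: leF_neg.
Qed.

Lemma leF_orN a : leF T0 (Or' a (Neg a)).
Proof.
apply: NegI; apply: Contra.
- apply: Mono (leF_andl _ _) _; exact: d_assum.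
- apply: Mono (leF_andr _ _) _; exact: d_assum.
Qed.

Lemma leF_OM a b : leF a b -> leF b (Or' a (And (Neg a) b)).
Proof.
move=> hab; apply: (d_em (p:=a)).
- apply: Mono (leF_orl _ _) _; exact: d_assum.
- apply: Mono (leF_orr _ _) _; apply: d_andI; first exact: d_assum.
  apply: (C5 [::]); apply: leF_neg hab.
Qed.

Lemma leF_imp1 p q : leF (Imp p q) (Or' (Neg p) (And p q)).
Proof.
apply: (d_em (p:=p)).
- apply: Mono (leF_orr _ _) _; apply: d_andI; first exact: d_assum.
  apply: d_impE; exact: leF_refl.
- apply: Mono (leF_orl _ _) _; exact: d_assum.
Qed.

Lemma leF_imp2 p q : leF (Or' (Neg p) (And p q)) (Imp p q).
Proof.
apply: leF_orP; apply: d_impI.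
- apply: d_explo; exact: leF_refl.
- apply: d_paste; [exact: leF_andl | exact: leF_andr].
Qed.

Lemma unfold_imp H G c : D H (foldr Imp c G) -> D (H ++ G) c.
Proof.
elim: G H => [|a G IH] H /=; first by rewrite cats0.
move=> h; have := IH (rcons H a) (d_impE h); by rewrite cat_rcons.
Qed.

Section Lat.
Context {d : Order.disp_t} {L : tbLatticeType d} (ortho : L -> L).
Hypothesis OM : orthomodular ortho.

Lemma sand_adj x a c : sand ortho x a <= c -> x <= simp ortho a c.
Proof.
case: OM => inv anti mN jN om h.
set y := Order.join x (ortho a).
have hy : Order.join (ortho a) (Order.meet (ortho (ortho a)) y) = y.
  by apply: om; exact: leUr.
rewrite inv in hy.
have h1 : Order.meet a y <= Order.meet a c.
  by rewrite lexI leIl /= (le_trans _ h) // /sand meetC.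
apply: (le_trans (leUl x (ortho a))); rewrite -/y -hy /simp.
by apply: leU2.
Qed.

Lemma sand_seq_rcons s a : sand_seq ortho (rcons s a) = sand ortho (sand_seq ortho s) a.
Proof.
case: s => [|b s] /=; last by rewrite foldl_rcons.
by rewrite /sand join1x meet1x.
Qed.

Lemma sand_seq_curry (v : form -> L) (G : seq form) c :
  interp_hom ortho v ->
  sand_seq ortho (map v G) <= v c -> \top <= v (foldr Imp c G).
Proof.
move=> [vA vI vN]; elim/last_ind: G c => [|s a IH] c /=; first by [].
rewrite map_rcons sand_seq_rcons foldr_rcons => h.
apply: IH; rewrite vI; exact: sand_adj.
Qed.
End Lat.

Definition eqvF a b := leF a b /\ leF b a.

Lemma eqvF_refl a : eqvF a a.
Proof. by split; apply: leF_refl. Qed.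
Lemma eqvF_sym a b : eqvF a b -> eqvF b a.
Proof. by case. Qed.
Lemma eqvF_trans a b c : eqvF a b -> eqvF b c -> eqvF a c.
Proof. by move=> [h1 h2] [h3 h4]; split; apply: leF_trans; eassumption. Qed.

Definition LT := {P : form -> Prop | exists phi, P = eqvF phi}.
HB.instance Definition _ := gen_eqMixin LT.
HB.instance Definition _ := gen_choiceMixin LT.

Definition cls (a : form) : LT := exist _ (eqvF a) (ex_intro _ a erefl).
Definition rep (x : LT) : form := projT1 (cid (proj2_sig x)).

Lemma cls_eq a b : eqvF a b -> cls a = cls b.
Proof.
move=> h; apply: eq_exist; apply: funext => c; apply: propext; split.
- by move=> h2; apply: eqvF_trans (eqvF_sym h) h2.
- by move=> h2; apply: eqvF_trans h h2.
Qed.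

Lemma cls_eqv a b : cls a = cls b -> eqvF a b.
Proof.
move=> h; have : proj1_sig (cls a) b by rewrite h; exact: eqvF_refl.
by [].
Qed.

Lemma clsK x : cls (rep x) = x.
Proof.
rewrite /rep; case: (cid _) => phi /= e.
by case: x e => P hP /= e; apply: eq_exist.
Qed.

Lemma repK a : eqvF (rep (cls a)) a.
Proof. apply: cls_eqv; exact: clsK. Qed.

Definition leL (x y : LT) : bool := `[< leF (rep x) (rep y) >].

Lemma leL_cls a b : leL (cls a) (cls b) = `[< leF a b >].
Proof.
apply/asboolP/asboolP => h.
- case: (repK a) => _ h1; case: (repK b) => h2 _.
  by apply: leF_trans h1 (leF_trans h h2).
- case: (repK a) => h1 _; case: (repK b) => _ h2.
  by apply: leF_trans h1 (leF_trans h h2).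
Qed.

Lemma leL_refl : reflexive leL.
Proof. by move=> x; apply/asboolP; apply: leF_refl. Qed.
Lemma leL_trans : transitive leL.
Proof. by move=> y x z /asboolP h1 /asboolP h2; apply/asboolP; apply: leF_trans h1 h2. Qed.
Lemma leL_anti : antisymmetric leL.
Proof.
move=> x y /andP[/asboolP h1 /asboolP h2].
by rewrite -(clsK x) -(clsK y); apply: cls_eq.
Qed.

HB.instance Definition _ := @Order.Le_isPOrder.Build (Order.Disp tt tt) LT leL leL_refl leL_anti leL_trans.

Definition meetL (x y : LT) := cls (And (rep x) (rep y)).
Definition joinL (x y : LT) := cls (Or' (rep x) (rep y)).

Lemma meetLP x y z : (x <= meetL y z) = (x <= y) && (x <= z).
Proof.
rewrite -[x]clsK -[y]clsK -[z]clsK /meetL.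
change ((leL (cls (rep x)) (cls (And (rep (cls (rep y))) (rep (cls (rep z)))))) =
   leL (cls (rep x)) (cls (rep y)) && leL (cls (rep x)) (cls (rep z))).
rewrite !leL_cls !clsK.
apply/asboolP/andP => [h|[/asboolP h1 /asboolP h2]].
- by split; apply/asboolP; apply: leF_trans h _; [apply: leF_andl | apply: leF_andr].
- by apply: leF_and.
Qed.

Lemma joinLP x y z : (joinL x y <= z) = (x <= z) && (y <= z).
Proof.
rewrite -[x]clsK -[y]clsK -[z]clsK /joinL.
change ((leL (cls (Or' (rep (cls (rep x))) (rep (cls (rep y))))) (cls (rep z))) =
   leL (cls (rep x)) (cls (rep z)) && leL (cls (rep y)) (cls (rep z))).
rewrite !leL_cls !clsK.
apply/asboolP/andP => [h|[/asboolP h1 /asboolP h2]].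
- by split; apply/asboolP; apply: leF_trans _ h; [apply: leF_orl | apply: leF_orr].
- by apply: leF_orP.
Qed.

HB.instance Definition _ := @Order.POrder_MeetJoin_isLattice.Build (Order.Disp tt tt) LT meetL joinL meetLP joinLP.

Lemma botL_le x : cls (Neg T0) <= x.
Proof. by rewrite -[x]clsK; change (leL (cls (Neg T0)) (cls (rep x))); rewrite leL_cls; apply/asboolP; apply: leF_bot. Qed.
Lemma topL_le x : x <= cls T0.
Proof. by rewrite -[x]clsK; change (leL (cls (rep x)) (cls T0)); rewrite leL_cls; apply/asboolP; apply: leF_top. Qed.

HB.instance Definition _ := @Order.hasBottom.Build (Order.Disp tt tt) LT (cls (Neg T0)) botL_le.
HB.instance Definition _ := @Order.hasTop.Build (Order.Disp tt tt) LT (cls T0) topL_le.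


Definition orthoL (x : LT) : LT := cls (Neg (rep x)).

Lemma eqv_and a b a' b' : eqvF a a' -> eqvF b b' -> eqvF (And a b) (And a' b').
Proof.
move=> [h1 h2] [h3 h4]; split; apply: leF_and.
- exact: leF_trans (leF_andl _ _) h1.
- exact: leF_trans (leF_andr _ _) h3.
- exact: leF_trans (leF_andl _ _) h2.
- exact: leF_trans (leF_andr _ _) h4.
Qed.

Lemma eqv_neg a a' : eqvF a a' -> eqvF (Neg a) (Neg a').
Proof. by move=> [h1 h2]; split; apply: leF_neg. Qed.

Lemma eqv_or a b a' b' : eqvF a a' -> eqvF b b' -> eqvF (Or' a b) (Or' a' b').
Proof. by move=> h1 h2; apply: eqv_neg; apply: eqv_and; apply: eqv_neg. Qed.

Lemma cls_and a b : cls (And a b) = Order.meet (cls a) (cls b).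
Proof.
change (cls (And a b) = cls (And (rep (cls a)) (rep (cls b)))).
by apply: cls_eq; apply: eqv_and; apply: eqvF_sym; apply: repK.
Qed.

Lemma cls_or a b : cls (Or' a b) = Order.join (cls a) (cls b).
Proof.
change (cls (Or' a b) = cls (Or' (rep (cls a)) (rep (cls b)))).
by apply: cls_eq; apply: eqv_or; apply: eqvF_sym; apply: repK.
Qed.

Lemma cls_neg a : cls (Neg a) = orthoL (cls a).
Proof.
rewrite /orthoL; apply: cls_eq; apply: eqv_neg; apply: eqvF_sym; apply: repK.
Qed.

Lemma le_cls a b : (cls a <= cls b) = `[< leF a b >].
Proof. exact: leL_cls. Qed.

Lemma cls_top : (\top : LT) = cls T0.
Proof. by []. Qed.
Lemma cls_bot : (\bot : LT) = cls (Neg T0).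
Proof. by []. Qed.

Lemma orthoL_OM : orthomodular orthoL.
Proof.
split.
- move=> x; rewrite -(clsK x) -!cls_neg; apply: cls_eq; split.
  + exact: leF_DNE.
  + exact: leF_DNI.
- move=> x y; rewrite -(clsK x) -(clsK y) -!cls_neg !le_cls.
  by move=> /asboolP h; apply/asboolP; apply: leF_neg.
- move=> x; rewrite -(clsK x) -!cls_neg -cls_and cls_bot; apply: cls_eq; split.
  + exact: leF_andN.
  + exact: leF_bot.
- move=> x; rewrite -(clsK x) -!cls_neg -cls_or cls_top; apply: cls_eq; split.
  + exact: leF_top.
  + exact: leF_orN.
- move=> x y; rewrite -(clsK x) -(clsK y) le_cls => /asboolP h.
  rewrite -cls_neg -cls_and -cls_or; apply: cls_eq; split.
  + apply: leF_orP => //; exact: leF_andr.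
  + exact: leF_OM.
Qed.

Lemma cls_hom : interp_hom orthoL cls.
Proof.
split.
- exact: cls_and.
- move=> p q; rewrite /simp -cls_neg -cls_and -cls_or; apply: cls_eq; split.
  + exact: leF_imp1.
  + exact: leF_imp2.
- exact: cls_neg.
Qed.

Unset Implicit Arguments.
Theorem corollary3p9 (Gamma : seq form) (psi0 : form) :
  (forall (d : Order.disp_t) (L : tbLatticeType d) (ortho : L -> L),
      orthomodular ortho ->
      forall v : form -> L, interp_hom ortho v ->
        sand_seq ortho (map v Gamma) <= v psi0) ->
  derivable Gamma psi0.
Proof.
move=> H.
have h := H _ LT orthoL orthoL_OM cls cls_hom.
have := sand_seq_curry orthoL_OM cls_hom h.
rewrite cls_top le_cls => /asboolP h2.
have h3 : derivable [::] (foldr Imp psi0 Gamma).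
  by apply: (@d_cut [::] T0); [exact: thmT0 | exact: h2].
exact: (unfold_imp (H:=[::]) h3).
Qed.
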